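(* Against an oblivious adversary, if one of the two robots has zero wait time and zero computation delay in every cycle (while the other robot's wait times and computation delays are arbitrary nonnegative values chosen by the adversary), and the algorithm knows the speed ratio $\alpha$ of the robots, then it is possible to gather the two robots: there is a randomized algorithm such that the robots gather with positive probability.
   Context: Two robots are anonymous, oblivious (no memory of past cycles), silent (no communication) points in the Euclidean plane with no common coordinate system, each having access to random bits and moving at its own constant speed; $\alpha$ is the ratio of their speeds. Each robot repeatedly executes a cycle: it waits (wait time $\mathcal{W}$), looks (obtains a snapshot of the other robot's current position, which may be in motion), has a computation delay $\mathcal{C}$, then moves to a destination computed from the snapshot and its random bits, reaching it in the same cycle (rigid movement). A robot that looks and finds the other robot at its own position decides it has gathered and stops; gathering means both robots are at the same point. The scheduler is an adversary choosing wait times and computation delays; an oblivious adversary knows the algorithm but not the outcomes of random bits, so it fixes all these sequences before the execution. *)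

(* Defs.v *)
From Stdlib Require Import Reals.
Open Scope R_scope.

Definition point : Type := (R * R)%type.
Definition padd (p q : point) : point := (fst p + fst q, snd p + snd q).
Definition psub (p q : point) : point := (fst p - fst q, snd p - snd q).
Definition pscal (a : R) (p : point) : point := (a * fst p, a * snd p).
Definition dist (p q : point) : R :=
  sqrt ((fst p - fst q) ^ 2 + (snd p - snd q) ^ 2).

(** Robots are indexed by [bool]; the other robot of [i] is [negb i]. *)

(** An (anonymous, oblivious) randomized algorithm: given, in the robot's
    local coordinate system, its own position and the snapshot of the other
    robot's position, and the random bits of the current cycle, it outputs
    the destination (in local coordinates).  Both robots run the same one. *)
Definition algorithm : Type := point -> point -> (nat -> bool) -> point.

(** Random bits: [om i k j] is the j-th random bit of robot [i] in cycle [k]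
    (independent fair bits). *)
Definition randomness : Type := bool -> nat -> nat -> bool.

(** Everything an oblivious adversary fixes before the execution:
    initial positions, speeds, wait times, computation delays, and the local
    coordinate system (a similarity of the plane, with its inverse) used by
    each robot in each cycle. *)
Record adversary : Type := Adversary {
  init : bool -> point;
  speed : bool -> R;
  wait : bool -> nat -> R;
  delay : bool -> nat -> R;
  frame : bool -> nat -> point -> point;
  frame_inv : bool -> nat -> point -> point
}.

Definition is_similarity (f : point -> point) : Prop :=
  exists s, 0 < s /\ forall x y, dist (f x) (f y) = s * dist x y.

Definition admissible (alpha : R) (adv : adversary) (z : bool) : Prop :=
  0 < speed adv false /\ 0 < speed adv true /\
  speed adv false = alpha * speed adv true /\
  (forall i k, 0 <= wait adv i k /\ 0 <= delay adv i k) /\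
  (forall k, wait adv z k = 0 /\ delay adv z k = 0) /\
  (forall i k, is_similarity (frame adv i k) /\
     (forall x, frame_inv adv i k (frame adv i k x) = x) /\
     (forall x, frame adv i k (frame_inv adv i k x) = x)).

(** An execution: start time and start position of every cycle of every
    robot, and the trajectories of the robots. *)
Record execution : Type := Execution {
  start : bool -> nat -> R;
  spos : bool -> nat -> point;
  pos : bool -> R -> point
}.

Definition look_time (adv : adversary) (e : execution) (i : bool) (k : nat) : R :=
  start e i k + wait adv i k.

Definition snapshot (adv : adversary) (e : execution) (i : bool) (k : nat) : point :=
  pos e (negb i) (look_time adv e i k).

Definition stops_at (adv : adversary) (e : execution) (i : bool) (k : nat) : Prop :=
  snapshot adv e i k = spos e i k.

Definition active (adv : adversary) (e : execution) (i : bool) (k : nat) : Prop :=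
  forall j, (j < k)%nat -> ~ stops_at adv e i j.

Definition destination (A : algorithm) (adv : adversary) (om : randomness)
    (e : execution) (i : bool) (k : nat) : point :=
  frame_inv adv i k
    (A (frame adv i k (spos e i k)) (frame adv i k (snapshot adv e i k)) (om i k)).

(** [e] is an execution of algorithm [A] under adversary [adv] with random
    bits [om]: cycle = wait, look, compute, rigid straight move at the robot's
    constant speed; a robot seeing the other at its own position stops forever. *)
Definition is_execution (A : algorithm) (adv : adversary) (om : randomness)
    (e : execution) : Prop :=
  (forall i, start e i 0 = 0 /\ spos e i 0 = init adv i) /\
  (forall i k, active adv e i k ->
    (stops_at adv e i k ->
       forall t, start e i k <= t -> pos e i t = spos e i k) /\
    (~ stops_at adv e i k ->
       let P := spos e i k in
       let D := destination A adv om e i k in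
       let M := look_time adv e i k + delay adv i k in
       let E := M + dist P D / speed adv i in
       start e i (S k) = E /\ spos e i (S k) = D /\
       (forall t, start e i k <= t <= M -> pos e i t = P) /\
       (forall t, M <= t <= E ->
          pos e i t = padd P (pscal ((t - M) * speed adv i / dist P D) (psub D P))))).

Definition gathered (adv : adversary) (e : execution) : Prop :=
  exists k0 k1,
    active adv e false k0 /\ stops_at adv e false k0 /\
    active adv e true k1 /\ stops_at adv e true k1 /\
    spos e false k0 = spos e true k1.

(* Main.v *)
Require Import Defs.
From Stdlib Require Import Reals.
Open Scope R_scope.
From Stdlib Require Import Lra Lia Psatz Classical Bool.
Require Import Defs.

Definition beta_of (alpha : R) := alpha / ((1 + alpha) * (1 + alpha)).
Definition lam (alpha : R) (b : nat -> bool) : R :=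
  if b 0%nat then (if b 1%nat then 1 else 0)
  else if b 1%nat then (if b 2%nat then beta_of alpha else 1 / (1 + alpha))
  else alpha / (1 + alpha).
Definition Aalg (alpha : R) : algorithm :=
  fun p q b => padd p (pscal (lam alpha b) (psub q p)).

Definition code (b0 b1 b2 : bool) : nat -> bool :=
  fun j => match j with 0%nat => b0 | 1%nat => b1 | 2%nat => b2 | _ => false end.

Lemma lam_ext a b b' : (forall j, (j < 3)%nat -> b j = b' j) -> lam a b = lam a b'.
Proof. intros H. unfold lam. rewrite !H by lia. reflexivity. Qed.

Lemma sq_dist x y : dist x y ^ 2 = (fst x - fst y) ^ 2 + (snd x - snd y) ^ 2.
Proof. unfold dist. rewrite <- Rsqr_pow2. apply Rsqr_sqrt. apply Rplus_le_le_0_compat; apply pow2_ge_0. Qed.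

Lemma sim_affine (f g : point -> point) : is_similarity f -> (forall x, g (f x) = x) ->
  forall p q l, g (padd (f p) (pscal l (psub (f q) (f p)))) = padd p (pscal l (psub q p)).
Proof.
  intros [s [Hs Hf]] Hg p q l.
  set (X := padd p (pscal l (psub q p))).
  assert (Hsq : forall x y, dist (f x) (f y) ^ 2 = s^2 * dist x y ^ 2).
  { intros x y. rewrite Hf. ring. }
  pose proof (Hsq p X) as H1. pose proof (Hsq X q) as H2. pose proof (Hsq p q) as H3.
  rewrite !sq_dist in H1, H2, H3.
  rewrite <- (Hg X). f_equal.
  destruct (f p) as [a1 a2], (f X) as [x1 x2], (f q) as [b1 b2].
  subst X. destruct p as [p1 p2], q as [q1 q2].
  unfold padd, pscal, psub in *; cbn [fst snd] in *.
  set (D := (p1 - q1)^2 + (p2 - q2)^2) in *.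
  assert (E1 : (a1 - x1) ^ 2 + (a2 - x2) ^ 2 = s^2 * l^2 * D).
  { rewrite H1. unfold D. ring. }
  assert (E2 : (x1 - b1) ^ 2 + (x2 - b2) ^ 2 = s^2 * (1-l)^2 * D).
  { rewrite H2. unfold D. ring. }
  clear H1 H2.
  set (e1 := (1-l)*(x1-a1) - l*(b1-x1)).
  set (e2 := (1-l)*(x2-a2) - l*(b2-x2)).
  assert (Hz : e1^2 + e2^2 = 0).
  { assert (Hid : e1^2 + e2^2 = (1-l)^2*((a1 - x1) ^ 2 + (a2 - x2) ^ 2) + l^2*((x1 - b1) ^ 2 + (x2 - b2) ^ 2)
       - l*(1-l)*(((a1 - b1) ^ 2 + (a2 - b2) ^ 2) - ((a1 - x1) ^ 2 + (a2 - x2) ^ 2) - ((x1 - b1) ^ 2 + (x2 - b2) ^ 2))).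
    { unfold e1, e2. ring. }
    rewrite Hid, E1, E2, H3. fold D. ring. }
  assert (He1 : e1 = 0) by nra. assert (He2 : e2 = 0) by nra.
  unfold e1, e2 in *. f_equal; nra.
Qed.

Lemma speed_pos alpha adv z i : admissible alpha adv z -> 0 < speed adv i.
Proof. intros (H1 & H2 & _). destruct i; auto. Qed.

Lemma dest_eq alpha adv z om e i k : admissible alpha adv z ->
  destination (Aalg alpha) adv om e i k =
  padd (spos e i k) (pscal (lam alpha (om i k)) (psub (snapshot adv e i k) (spos e i k))).
Proof.
  intros (_ & _ & _ & _ & _ & Hf). destruct (Hf i k) as (Hs & Hi & _).
  unfold destination, Aalg. apply sim_affine; auto.
Qed.

Lemma active0 adv e i : active adv e i 0.
Proof. intros j Hj; lia. Qed.
Lemma activeS adv e i k : active adv e i k -> ~ stops_at adv e i k -> active adv e i (S k).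
Proof. intros Ha Hn j Hj. destruct (Nat.eq_dec j k); [subst; auto| apply Ha; lia]. Qed.
Lemma not_active adv e i k k' : stops_at adv e i k -> (k < k')%nat -> ~ active adv e i k'.
Proof. intros Hs Hk Ha. apply (Ha k Hk Hs). Qed.

Lemma ex_init A adv om e i : is_execution A adv om e -> start e i 0 = 0 /\ spos e i 0 = init adv i.
Proof. intros [H _]; auto. Qed.

Lemma ex_rest A adv om e i k : is_execution A adv om e -> active adv e i k ->
  forall t, start e i k <= t <= look_time adv e i k + delay adv i k -> pos e i t = spos e i k.
Proof.
  intros [_ H] Ha t Ht. destruct (H i k Ha) as [Hs Hn].
  destruct (classic (stops_at adv e i k)) as [S|S].
  - apply Hs; auto; lra.
  - pose proof (Hn S) as HH. cbv zeta in HH. destruct HH as (_ & _ & Hr & _). apply Hr; auto.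
Qed.

Lemma ex_stop A adv om e i k : is_execution A adv om e -> active adv e i k ->
  stops_at adv e i k -> forall t, start e i k <= t -> pos e i t = spos e i k.
Proof. intros [_ H] Ha S. destruct (H i k Ha) as [Hs _]. auto. Qed.

Lemma ex_move A adv om e i k : is_execution A adv om e -> active adv e i k ->
  ~ stops_at adv e i k ->
  let P := spos e i k in
  let D := destination A adv om e i k in
  let M := look_time adv e i k + delay adv i k in
  let E := M + dist P D / speed adv i in
  start e i (S k) = E /\ spos e i (S k) = D /\
  (forall t, M <= t <= E ->
     pos e i t = padd P (pscal ((t - M) * speed adv i / dist P D) (psub D P))).
Proof.
  intros [_ H] Ha S. destruct (H i k Ha) as [_ Hn].
  pose proof (Hn S) as HH. cbv zeta in HH |- *. destruct HH as (H1 & H2 & _ & H4). auto.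
Qed.

Definition Lp (W U : point) (s : R) : point := padd W (pscal s U).
Definition nrm (U : point) := sqrt (fst U ^ 2 + snd U ^ 2).

Lemma Lp_aff W U a b l :
  padd (Lp W U a) (pscal l (psub (Lp W U b) (Lp W U a))) = Lp W U (a + l * (b - a)).
Proof. destruct W, U; unfold Lp, padd, pscal, psub; cbn [fst snd]; f_equal; ring. Qed.

Lemma Lp_dist W U a b : dist (Lp W U a) (Lp W U b) = Rabs (a - b) * nrm U.
Proof.
  destruct W as [w1 w2], U as [u1 u2]; unfold dist, nrm, Lp, padd, pscal; cbn [fst snd].
  replace ((w1 + a * u1 - (w1 + b * u1)) ^ 2 + (w2 + a * u2 - (w2 + b * u2)) ^ 2)
    with (Rsqr (a - b) * (u1 ^ 2 + u2 ^ 2)) by (unfold Rsqr; ring).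
  rewrite sqrt_mult. rewrite sqrt_Rsqr_abs. reflexivity.
  apply Rle_0_sqr. apply Rplus_le_le_0_compat; apply pow2_ge_0.
Qed.

Lemma Lp_inj W U a b : 0 < nrm U -> Lp W U a = Lp W U b -> a = b.
Proof.
  intros Hn H. destruct W as [w1 w2], U as [u1 u2]. unfold Lp, padd, pscal in H; cbn [fst snd] in H.
  injection H as H1 H2. unfold nrm in Hn; cbn [fst snd] in Hn.
  destruct (Req_dec a b) as [|Hab]; auto. exfalso.
  assert (u1 = 0). { apply Rmult_eq_reg_l with (a - b). lra. lra. }
  assert (u2 = 0). { apply Rmult_eq_reg_l with (a - b). lra. lra. }
  subst. replace (0 ^ 2 + 0 ^ 2) with 0 in Hn by ring. rewrite sqrt_0 in Hn. lra.
Qed.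

Lemma Lp_neq W U a b : 0 < nrm U -> a <> b -> Lp W U a <> Lp W U b.
Proof. intros Hn H E. apply H. eapply Lp_inj; eauto. Qed.

Lemma Lp_move_dn W U a b t M v : 0 < nrm U -> b < a ->
  padd (Lp W U a) (pscal ((t - M) * v / dist (Lp W U a) (Lp W U b)) (psub (Lp W U b) (Lp W U a)))
  = Lp W U (a - (t - M) * v / nrm U).
Proof.
  intros Hn Hab. rewrite Lp_aff, Lp_dist. rewrite Rabs_right by lra. f_equal. field. lra.
Qed.

Lemma Lp_move_up W U a b t M v : 0 < nrm U -> a < b ->
  padd (Lp W U a) (pscal ((t - M) * v / dist (Lp W U a) (Lp W U b)) (psub (Lp W U b) (Lp W U a)))
  = Lp W U (a + (t - M) * v / nrm U).
Proof.
  intros Hn Hab. rewrite Lp_aff, Lp_dist. rewrite Rabs_left by lra. f_equal. field. lra.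
Qed.

Lemma Lp_move_eq W U a t M v :
  padd (Lp W U a) (pscal ((t - M) * v / dist (Lp W U a) (Lp W U a)) (psub (Lp W U a) (Lp W U a)))
  = Lp W U a.
Proof. rewrite Lp_aff. f_equal. ring. Qed.

Lemma Lp_dist' W U a b : a <= b -> dist (Lp W U a) (Lp W U b) = (b - a) * nrm U.
Proof. intros. rewrite Lp_dist, Rabs_left1 by lra. ring. Qed.
Lemma Lp_dist'' W U a b : b <= a -> dist (Lp W U a) (Lp W U b) = (a - b) * nrm U.
Proof. intros. rewrite Lp_dist, Rabs_right by lra. ring. Qed.

Definition mkex (z : bool) (zst : nat -> R) (zsp : nat -> point) (zpos : R -> point)
  (wst : nat -> R) (wsp : nat -> point) (wpos : R -> point) : execution :=
  Execution (fun i k => if Bool.eqb i z then zst k else wst k)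
            (fun i k => if Bool.eqb i z then zsp k else wsp k)
            (fun i t => if Bool.eqb i z then zpos t else wpos t).

Lemma eqb_nz z : Bool.eqb (negb z) z = false.
Proof. destruct z; reflexivity. Qed.

Lemma bool_cases (i z : bool) : i = z \/ i = negb z.
Proof. destruct i, z; auto. Qed.

Lemma min_nat (P : nat -> Prop) : (exists n, P n) -> exists n, P n /\ forall k, (k < n)%nat -> ~ P k.
Proof.
  intros [m Hm]. revert Hm. induction m as [m IH] using (well_founded_induction Wf_nat.lt_wf). intros Hm.
  destruct (classic (exists k, (k < m)%nat /\ P k)) as [[k [Hk Pk]]|Hno].
  - exact (IH k Hk Pk).
  - exists m. split; auto. intros k Hk Pk. apply Hno. eauto.
Qed.

Lemma ex_move_L alpha adv z om e i k W U a b :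
  is_execution (Aalg alpha) adv om e -> admissible alpha adv z -> active adv e i k ->
  0 < nrm U -> spos e i k = Lp W U a -> snapshot adv e i k = Lp W U b -> a <> b ->
  let a' := a + lam alpha (om i k) * (b - a) in
  let M := look_time adv e i k + delay adv i k in
  start e i (S k) = M + Rabs (a - a') * nrm U / speed adv i /\ spos e i (S k) = Lp W U a' /\
  (forall t, M <= t <= M + Rabs (a - a') * nrm U / speed adv i ->
    pos e i t = padd (Lp W U a) (pscal ((t - M) * speed adv i / dist (Lp W U a) (Lp W U a'))
                                        (psub (Lp W U a') (Lp W U a)))).
Proof.
  intros He Had Ha Hn Hs Hsn Hab a' M.
  assert (NS : ~ stops_at adv e i k).
  { unfold stops_at. rewrite Hs, Hsn. apply Lp_neq; auto. }
  pose proof (ex_move _ _ _ _ _ _ He Ha NS) as HH. cbv zeta in HH.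
  rewrite (dest_eq alpha adv z) in HH by auto.
  rewrite Hs, Hsn, Lp_aff, Lp_dist in HH. fold a' in HH. fold M in HH.
  destruct HH as (H1 & H2 & H3). split; [|split].
  - rewrite H1. unfold Rdiv. ring.
  - exact H2.
  - intros t Ht. rewrite H3. rewrite Lp_dist. reflexivity. split; [lra|].
    unfold Rdiv in *. rewrite Rmult_assoc. lra.
Qed.

Lemma beta_pos alpha : 0 < alpha -> 0 < beta_of alpha < 1.
Proof.
  intros Ha. unfold beta_of. split.
  - apply Rdiv_lt_0_compat; nra.
  - apply Rmult_lt_reg_r with ((1 + alpha) * (1 + alpha)). nra.
    unfold Rdiv. rewrite Rmult_assoc, Rinv_l by nra. nra.
Qed.

Definition codec (z : bool) := if z then code false true false else code false false false.

Lemma lam_c alpha adv z : 0 < alpha -> admissible alpha adv z ->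
  lam alpha (codec z) = speed adv z / (speed adv z + speed adv (negb z)).
Proof.
  intros Ha (H1 & H2 & H3 & _). destruct z; unfold codec, lam, code; simpl; rewrite H3; field; nra.
Qed.

Lemma beta_le alpha adv z : 0 < alpha -> admissible alpha adv z ->
  beta_of alpha * speed adv (negb z) <= (1 - beta_of alpha) * speed adv z.
Proof.
  intros Ha (H1 & H2 & H3 & _). unfold beta_of.
  assert (Hq : 0 < (1 + alpha) * (1 + alpha)) by nra.
  destruct z; simpl; rewrite H3.
  - apply Rmult_le_reg_r with ((1 + alpha) * (1 + alpha)); auto.
    unfold Rdiv. field_simplify; nra.
  - apply Rmult_le_reg_r with ((1 + alpha) * (1 + alpha)); auto.
    unfold Rdiv. field_simplify; nra.
Qed.

Lemma gathered_of adv e z kz kw : active adv e z kz -> stops_at adv e z kz ->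
  active adv e (negb z) kw -> stops_at adv e (negb z) kw -> spos e z kz = spos e (negb z) kw ->
  gathered adv e.
Proof. destruct z; simpl; intros; [exists kw, kz | exists kz, kw]; repeat split; auto. Qed.

Lemma mk_start_z z a b c d f g k : start (mkex z a b c d f g) z k = a k.
Proof. unfold mkex; simpl. rewrite eqb_reflx. reflexivity. Qed.
Lemma mk_start_w z a b c d f g k : start (mkex z a b c d f g) (negb z) k = d k.
Proof. unfold mkex; simpl. rewrite eqb_nz. reflexivity. Qed.
Lemma mk_spos_z z a b c d f g k : spos (mkex z a b c d f g) z k = b k.
Proof. unfold mkex; simpl. rewrite eqb_reflx. reflexivity. Qed.
Lemma mk_spos_w z a b c d f g k : spos (mkex z a b c d f g) (negb z) k = f k.
Proof. unfold mkex; simpl. rewrite eqb_nz. reflexivity. Qed.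
Lemma mk_pos_z z a b c d f g t : pos (mkex z a b c d f g) z t = c t.
Proof. unfold mkex; simpl. rewrite eqb_reflx. reflexivity. Qed.
Lemma mk_pos_w z a b c d f g t : pos (mkex z a b c d f g) (negb z) t = g t.
Proof. unfold mkex; simpl. rewrite eqb_nz. reflexivity. Qed.

Lemma snap_w adv e z k : snapshot adv e (negb z) k = pos e z (look_time adv e (negb z) k).
Proof. unfold snapshot. rewrite negb_involutive. reflexivity. Qed.

Lemma Lp_1 (Z W : point) : Lp W (psub Z W) 1 = Z.
Proof. destruct Z, W; unfold Lp, padd, pscal, psub; cbn [fst snd]; f_equal; ring. Qed.
Lemma Lp_0 (Z W : point) : Lp W (psub Z W) 0 = W.
Proof. destruct Z, W; unfold Lp, padd, pscal, psub; cbn [fst snd]; f_equal; ring. Qed.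

Definition clause (A : algorithm) adv om e i k : Prop :=
    (stops_at adv e i k ->
       forall t, start e i k <= t -> pos e i t = spos e i k) /\
    (~ stops_at adv e i k ->
       let P := spos e i k in
       let D := destination A adv om e i k in
       let M := look_time adv e i k + delay adv i k in
       let E := M + dist P D / speed adv i in
       start e i (S k) = E /\ spos e i (S k) = D /\
       (forall t, start e i k <= t <= M -> pos e i t = P) /\
       (forall t, M <= t <= E ->
          pos e i t = padd P (pscal ((t - M) * speed adv i / dist P D) (psub D P)))).

Lemma clause_move alpha adv z om e i k W U a b l :
  admissible alpha adv z -> 0 < nrm U -> spos e i k = Lp W U a -> snapshot adv e i k = Lp W U b ->
  a <> b -> lam alpha (om i k) = l ->
  let a' := a + l * (b - a) in
  let M := look_time adv e i k + delay adv i k in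
  start e i (S k) = M + Rabs (a - a') * nrm U / speed adv i ->
  spos e i (S k) = Lp W U a' ->
  (forall t, start e i k <= t <= M -> pos e i t = Lp W U a) ->
  (forall t, M <= t <= M + Rabs (a - a') * nrm U / speed adv i ->
     pos e i t = padd (Lp W U a) (pscal ((t - M) * speed adv i / dist (Lp W U a) (Lp W U a'))
                                        (psub (Lp W U a') (Lp W U a)))) ->
  clause (Aalg alpha) adv om e i k.
Proof.
  intros Had Hn Hs Hsn Hab Hl a' M H1 H2 H3 H4. split.
  - intros S. exfalso. unfold stops_at in S. rewrite Hs, Hsn in S. eapply Lp_neq; eauto.
  - intros _. cbv zeta. rewrite (dest_eq alpha adv z) by auto. rewrite Hs, Hsn, Lp_aff, Hl.
    fold a'. fold M. rewrite Lp_dist. split; [|split; [|split]]; auto.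
    intros t Ht. rewrite H4 by auto. rewrite Lp_dist. reflexivity.
Qed.

Lemma clause_stop A adv om e i k :
  stops_at adv e i k -> (forall t, start e i k <= t -> pos e i t = spos e i k) ->
  clause A adv om e i k.
Proof. intros S H. split; auto. intros NS; contradiction. Qed.

Lemma is_exec_of A adv om e :
  (forall i, start e i 0 = 0 /\ spos e i 0 = init adv i) ->
  (forall i k, active adv e i k -> clause A adv om e i k) -> is_execution A adv om e.
Proof. intros H1 H2. split; auto. Qed.

Lemma scenC alpha adv z :
  0 < alpha -> admissible alpha adv z ->
  0 < nrm (psub (init adv z) (init adv (negb z))) ->
  wait adv (negb z) 0 + delay adv (negb z) 0 < nrm (psub (init adv z) (init adv (negb z))) / speed adv z ->
  exists (N : nat) (rho : randomness),
  forall om : randomness,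
    (forall i k j, (k < N)%nat -> (j < N)%nat -> om i k j = rho i k j) ->
    (exists e, is_execution (Aalg alpha) adv om e) /\
    (forall e, is_execution (Aalg alpha) adv om e -> gathered adv e).
Proof.
  intros Hal Had Hd HM.
  pose proof Had as (_ & _ & _ & Hwd & Hz & _).
  set (W := init adv (negb z)) in *.
  set (U := psub (init adv z) W) in *.
  set (d := nrm U) in *.
  set (L := Lp W U).
  assert (HL1 : L 1 = init adv z) by apply Lp_1.
  assert (HL0 : L 0 = W) by apply Lp_0.
  set (vz := speed adv z) in *. set (vw := speed adv (negb z)) in *.
  assert (Hvz : 0 < vz) by (eapply speed_pos; eauto).
  assert (Hvw : 0 < vw) by (eapply speed_pos; eauto).
  set (t0 := wait adv (negb z) 0) in *.
  set (M0 := t0 + delay adv (negb z) 0) in *.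
  assert (Ht0 : 0 <= t0) by apply Hwd.
  assert (HM0 : t0 <= M0) by (pose proof (proj2 (Hwd (negb z) 0%nat)); unfold M0; lra).
  pose proof (beta_pos alpha Hal) as Hb.
  pose proof (beta_le alpha adv z Hal Had) as Hble. fold vz vw in Hble.
  set (b := beta_of alpha) in *.
  set (a := fun k : nat => (1 - b) ^ k).
  assert (HaS : forall k, a (S k) = (1 - b) * a k) by reflexivity.
  assert (Ha0 : a 0%nat = 1) by reflexivity.
  assert (Hapos : forall k, 0 < a k <= 1).
  { induction k as [|k IH]; [rewrite Ha0; lra| rewrite HaS; nra]. }
  set (tau := fun k => (1 - a k) * d / vz).
  assert (Htau0 : forall k, 0 <= tau k).
  { intros k. unfold tau. pose proof (Hapos k). apply Rmult_le_pos; [|apply Rlt_le, Rinv_0_lt_compat; auto]. nra. }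
  assert (HtauS : forall k, tau (S k) = tau k + b * a k * d / vz).
  { intros k. unfold tau. rewrite HaS. field. lra. }
  assert (Htaumono : forall k m, (k <= m)%nat -> tau k <= tau m).
  { intros k m H. induction H; [lra|]. rewrite HtauS.
    assert (0 <= b * a m * d / vz).
    { pose proof (Hapos m). apply Rmult_le_pos; [|left; apply Rinv_0_lt_compat; auto]. destruct (Hapos m). apply Rmult_le_pos; [apply Rmult_le_pos|]; lra. }
    lra. }
  assert (Hex : exists k, M0 <= tau k).
  { destruct (pow_lt_1_zero (1 - b) ltac:(rewrite Rabs_right; lra) (1 - M0 * vz / d)) as [N0 HN0].
    { apply Rlt_0_minus. apply Rmult_lt_reg_r with (d / vz). apply Rdiv_lt_0_compat; auto.
      replace (M0 * vz / d * (d / vz)) with M0 by (field; lra). lra. }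
    exists N0. specialize (HN0 N0 (le_n _)). rewrite Rabs_right in HN0.
    2:{ apply Rle_ge, pow_le. lra. }
    unfold tau, a. apply Rmult_le_reg_r with (vz / d). apply Rdiv_lt_0_compat; auto.
    replace ((1 - (1 - b) ^ N0) * d / vz * (vz / d)) with (1 - (1 - b) ^ N0) by (field; lra). lra. }
  destruct (min_nat _ Hex) as [n [Hn Hlt]].
  assert (Hlt' : forall k, (k < n)%nat -> tau k < M0).
  { intros k Hk. apply Rnot_le_lt. apply Hlt; auto. }
  set (c := vz / (vz + vw)).
  assert (Hc : 0 < c < 1).
  { unfold c. split. apply Rdiv_lt_0_compat; lra.
    apply Rmult_lt_reg_r with (vz + vw). lra. unfold Rdiv. rewrite Rmult_assoc, Rinv_l by lra. lra. }
  assert (Hcv : c * vw = (1 - c) * vz) by (unfold c; field; lra).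
  set (x0 := 1 - vz * t0 / d).
  assert (Hx0 : 0 < x0).
  { unfold x0. apply Rlt_0_minus. apply Rmult_lt_reg_r with (d / vz). apply Rdiv_lt_0_compat; auto.
    replace (vz * t0 / d * (d / vz)) with t0 by (field; lra). lra. }
  assert (Han : a n <= x0).
  { unfold x0. assert (a n = 1 - vz * tau n / d) by (unfold tau; field; lra).
    rewrite H. assert (vz * t0 / d <= vz * tau n / d). 
    { unfold Rdiv. apply Rmult_le_compat_r. left; apply Rinv_0_lt_compat; auto.
      apply Rmult_le_compat_l; lra. }
    lra. }
  set (y := (tau n - M0) * vw / d).
  assert (Hy0 : 0 <= y).
  { unfold y. apply Rmult_le_pos; [apply Rmult_le_pos; lra| left; apply Rinv_0_lt_compat; auto]. }
  assert (Hyn : y < a n).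
  { destruct n as [|m].
    - assert (tau 0%nat = 0) by (unfold tau; rewrite Ha0; field; lra).
      assert (M0 = 0) by lra. unfold y. rewrite H, H0. rewrite Ha0. unfold Rdiv. lra.
    - assert (Hm : tau m < M0) by (apply Hlt'; lia).
      pose proof (Hapos m).
      assert (y * d < b * a m * d / vz * vw).
      { unfold y. replace ((tau (S m) - M0) * vw / d * d) with ((tau (S m) - M0) * vw) by (field; lra).
        apply Rmult_lt_compat_r; auto. rewrite HtauS in *. lra. }
      assert (b * a m * d / vz * vw <= (1 - b) * a m * d).
      { replace (b * a m * d / vz * vw) with ((b * vw) * (a m * d) / vz) by (field; lra).
        replace ((1 - b) * a m * d) with (((1 - b) * vz) * (a m * d) / vz) by (field; lra).
        unfold Rdiv. apply Rmult_le_compat_r. left; apply Rinv_0_lt_compat; auto.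
        apply Rmult_le_compat_r. nra. auto. }
      rewrite HaS. nra. }
  set (p := a n + c * (y - a n)).
  assert (Hpy : y < p < a n) by (unfold p; nra).
  set (taum := tau n + c * (a n - y) * d / vz).
  assert (Htaum : (taum - M0) * vw / d = p).
  { unfold taum, p. unfold y at 2. 
    replace ((tau n + c * (a n - y) * d / vz - M0) * vw / d)
      with ((tau n - M0) * vw / d + (c * vw) * (a n - y) / vz) by (field; lra).
    rewrite Hcv. fold y. field. lra. }
  assert (Htaum1 : 1 - vz * taum / d = p).
  { unfold taum, p. unfold tau. field. lra. }
  assert (Htaun : tau n <= taum).
  { unfold taum. assert (0 <= c * (a n - y) * d / vz).
    { apply Rmult_le_pos; [|left; apply Rinv_0_lt_compat; auto]. apply Rmult_le_pos; [|lra]. nra. } lra. }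
  set (E0 := M0 + x0 * d / vw).
  assert (HE0 : taum < E0).
  { unfold E0. apply Rmult_lt_reg_r with (vw / d). apply Rdiv_lt_0_compat; auto.
    replace ((M0 + x0 * d / vw) * (vw / d)) with (M0 * vw / d + x0) by (field; lra).
    replace (taum * (vw / d)) with ((taum - M0) * vw / d + M0 * vw / d) by (field; lra).
    rewrite Htaum. lra. }
  set (rho := fun (i : bool) (k j : nat) =>
     if Bool.eqb i z then (if (k <? n)%nat then code false true true j else codec z j)
     else code true true false j).
  exists (n + 3)%nat, rho. intros om Hom.
  assert (Hlz : forall k, (k < n)%nat -> lam alpha (om z k) = b).
  { intros k Hk. rewrite (lam_ext alpha (om z k) (rho z k)) by (intros; apply Hom; lia).
    unfold rho. rewrite eqb_reflx. replace (k <? n)%nat with true by (symmetry; apply Nat.ltb_lt; auto).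
    reflexivity. }
  assert (Hlzn : lam alpha (om z n) = c).
  { rewrite (lam_ext alpha (om z n) (rho z n)) by (intros; apply Hom; lia).
    unfold rho. rewrite eqb_reflx. rewrite Nat.ltb_irrefl. apply lam_c; auto. }
  assert (Hlw : forall k, (k < 3)%nat -> lam alpha (om (negb z) k) = 1).
  { intros k Hk. rewrite (lam_ext alpha (om (negb z) k) (rho (negb z) k)) by (intros; apply Hom; lia).
    unfold rho. rewrite eqb_nz. reflexivity. }
  split.
  - set (M1 := E0 + wait adv (negb z) 1 + delay adv (negb z) 1).
    set (E1 := M1 + (x0 - p) * d / vw).
    assert (HM0E0 : M0 < E0).
    { unfold E0. assert (0 < x0 * d / vw) by (apply Rdiv_lt_0_compat; nra). lra. }
    assert (HE0M1 : E0 <= M1).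
    { unfold M1. pose proof (Hwd (negb z) 1%nat). lra. }
    assert (HM1E1 : M1 < E1).
    { unfold E1. assert (0 < (x0 - p) * d / vw) by (apply Rdiv_lt_0_compat; nra). lra. }
    set (zp := fun t => if Rle_dec t taum then 1 - vz * t / d else p).
    assert (zpA : forall t, t <= taum -> zp t = 1 - vz * t / d).
    { intros t Ht. unfold zp. destruct (Rle_dec t taum); [reflexivity|lra]. }
    assert (zpB : forall t, taum <= t -> zp t = p).
    { intros t Ht. unfold zp. destruct (Rle_dec t taum); [|reflexivity].
      assert (t = taum) by lra. subst t. auto. }
    set (wp := fun t => if Rle_dec t M0 then 0 else if Rle_dec t E0 then (t - M0) * vw / d
                        else if Rle_dec t M1 then x0 else if Rle_dec t E1 then x0 - (t - M1) * vw / d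
                        else p).
    assert (wpA : forall t, t <= M0 -> wp t = 0).
    { intros t Ht. unfold wp. destruct (Rle_dec t M0); [reflexivity|lra]. }
    assert (wpB : forall t, M0 <= t <= E0 -> wp t = (t - M0) * vw / d).
    { intros t Ht. unfold wp. destruct (Rle_dec t M0).
      - assert (t = M0) by lra. subst t. unfold Rdiv. ring.
      - destruct (Rle_dec t E0); [reflexivity|lra]. }
    assert (wpC : forall t, E0 <= t <= M1 -> wp t = x0).
    { intros t Ht. unfold wp. destruct (Rle_dec t M0); [lra|]. destruct (Rle_dec t E0).
      - assert (t = E0) by lra. subst t. unfold E0. field. lra.
      - destruct (Rle_dec t M1); [reflexivity|lra]. }
    assert (wpD : forall t, M1 <= t <= E1 -> wp t = x0 - (t - M1) * vw / d).
    { intros t Ht. unfold wp. destruct (Rle_dec t M0); [lra|]. destruct (Rle_dec t E0).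
      - assert (t = E0) by lra. assert (HEM : E0 = M1) by lra. subst t. rewrite <- HEM. unfold E0. field. lra.
      - destruct (Rle_dec t M1).
        + assert (t = M1) by lra. subst t. unfold Rdiv. ring.
        + destruct (Rle_dec t E1); [reflexivity|lra]. }
    assert (wpE : forall t, E1 <= t -> wp t = p).
    { intros t Ht. unfold wp. destruct (Rle_dec t M0); [lra|]. destruct (Rle_dec t E0); [lra|].
      destruct (Rle_dec t M1); [lra|]. destruct (Rle_dec t E1); [|reflexivity].
      assert (t = E1) by lra. subst t. unfold E1. field. lra. }
    set (e := mkex z (fun k => if (k <=? n)%nat then tau k else taum)
                     (fun k => if (k <=? n)%nat then L (a k) else L p)
                     (fun t => L (zp t))
                     (fun k => match k with 0%nat => 0 | 1%nat => E0 | _ => E1 end)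
                     (fun k => match k with 0%nat => L 0 | 1%nat => L x0 | _ => L p end)
                     (fun t => L (wp t))).
    assert (ezs : forall k, (k <= n)%nat -> start e z k = tau k).
    { intros k Hk. unfold e. rewrite mk_start_z. replace (k <=? n)%nat with true by (symmetry; apply Nat.leb_le; auto). reflexivity. }
    assert (ezp : forall k, (k <= n)%nat -> spos e z k = L (a k)).
    { intros k Hk. unfold e. rewrite mk_spos_z. replace (k <=? n)%nat with true by (symmetry; apply Nat.leb_le; auto). reflexivity. }
    assert (ezsS : start e z (S n) = taum).
    { unfold e. rewrite mk_start_z. replace (S n <=? n)%nat with false by (symmetry; apply Nat.leb_gt; auto). reflexivity. }
    assert (ezpS : spos e z (S n) = L p).
    { unfold e. rewrite mk_spos_z. replace (S n <=? n)%nat with false by (symmetry; apply Nat.leb_gt; auto). reflexivity. }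
    assert (ezpos : forall t, pos e z t = L (zp t)) by (intros; unfold e; rewrite mk_pos_z; reflexivity).
    assert (ewpos : forall t, pos e (negb z) t = L (wp t)) by (intros; unfold e; rewrite mk_pos_w; reflexivity).
    assert (ews : forall k, start e (negb z) k = match k with 0%nat => 0 | 1%nat => E0 | _ => E1 end)
      by (intros; unfold e; rewrite mk_start_w; reflexivity).
    assert (ewp : forall k, spos e (negb z) k = match k with 0%nat => L 0 | 1%nat => L x0 | _ => L p end)
      by (intros; unfold e; rewrite mk_spos_w; reflexivity).
    assert (SzS : stops_at adv e z (S n)).
    { unfold stops_at, snapshot, look_time. rewrite ezsS, ezpS, (proj1 (Hz (S n))), Rplus_0_r.
      rewrite ewpos, wpB by lra. rewrite Htaum. reflexivity. }
    assert (Sw2 : stops_at adv e (negb z) 2).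
    { unfold stops_at. rewrite snap_w, ezpos, ewp. unfold look_time. rewrite ews.
      rewrite zpB. reflexivity. pose proof (Hwd (negb z) 2%nat). lra. }
    exists e. apply is_exec_of.
    + intros i. destruct (bool_cases i z) as [->| ->].
      * rewrite ezs, ezp by lia. split. unfold tau. rewrite Ha0. unfold Rdiv. ring. rewrite Ha0. auto.
      * rewrite ews, ewp. split; auto.
    + intros i k Hact. destruct (bool_cases i z) as [->| ->].
      * destruct (Nat.lt_ge_cases k n) as [Hk|Hk].
        {
          pose proof (Hapos k) as Hak. pose proof (Htau0 k).
          assert (Htk : tau k < M0) by auto.
          assert (Hlook : look_time adv e z k = tau k).
          { unfold look_time. rewrite ezs by lia. rewrite (proj1 (Hz k)). ring. }
          apply (clause_move alpha adv z om e z k W U (a k) 0 b); auto.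
          - apply ezp; lia.
          - unfold snapshot. rewrite Hlook, ewpos, wpA by lra. reflexivity.
          - lra.
          - rewrite (proj2 (Hz k)), Hlook. rewrite ezs by lia. fold vz d.
            replace (Rabs (a k - (a k + b * (0 - a k)))) with (b * a k) by (rewrite Rabs_right; nra).
            rewrite HtauS. field. lra.
          - rewrite ezp by lia. apply (f_equal (Lp W U)). rewrite HaS. ring.
          - intros t Ht. rewrite ezs in Ht by lia. rewrite (proj2 (Hz k)), Hlook in Ht.
            assert (t = tau k) by lra. subst t. rewrite ezpos, zpA by lra. apply (f_equal (Lp W U)). unfold tau. field. lra.
          - intros t Ht. rewrite (proj2 (Hz k)), Hlook in Ht |- *. fold vz d in Ht.
            replace (Rabs (a k - (a k + b * (0 - a k)))) with (b * a k) in Ht by (rewrite Rabs_right; nra).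
            rewrite ezpos, zpA. unfold L. rewrite Lp_move_dn; auto. apply (f_equal (Lp W U)). change (speed adv z) with vz; change (nrm U) with d. unfold tau. field. lra.
            nra. assert (tau k + b * a k * d / vz = tau (S k)) by (rewrite HtauS; reflexivity).
            assert (tau (S k) <= tau n) by (apply Htaumono; lia).
            lra. }
        destruct (Nat.eq_dec k n) as [->|Hk'].
        {
          assert (Hlook : look_time adv e z n = tau n).
          { unfold look_time. rewrite ezs by lia. rewrite (proj1 (Hz n)). ring. }
          apply (clause_move alpha adv z om e z n W U (a n) y c); auto.
          - unfold snapshot. rewrite Hlook, ewpos, wpB. reflexivity. split; auto.
            unfold E0. apply Rmult_le_reg_r with (vw / d). apply Rdiv_lt_0_compat; auto.
            replace ((M0 + x0 * d / vw) * (vw / d)) with (M0 * vw / d + x0) by (field; lra).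
            replace (tau n * (vw / d)) with (y + M0 * vw / d) by (unfold y; field; lra). lra.
          - lra.
          - fold p. rewrite (proj2 (Hz n)), Hlook, ezsS. fold vz d.
            replace (Rabs (a n - p)) with (c * (a n - y)) by (rewrite Rabs_right; unfold p; nra).
            unfold taum. field. lra.
          - intros t Ht. rewrite ezs in Ht by lia. rewrite (proj2 (Hz n)), Hlook in Ht.
            assert (t = tau n) by lra. subst t. rewrite ezpos, zpA by lra.
            apply (f_equal (Lp W U)). unfold tau. field. lra.
          - fold p. intros t Ht. rewrite (proj2 (Hz n)), Hlook in Ht |- *. fold vz d in Ht.
            replace (Rabs (a n - p)) with (c * (a n - y)) in Ht by (rewrite Rabs_right; unfold p; nra).
            rewrite ezpos, zpA. unfold L. rewrite Lp_move_dn; auto. apply (f_equal (Lp W U)). change (speed adv z) with vz; change (nrm U) with d. unfold tau. field. lra.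
            lra. unfold taum. lra. }
        destruct (Nat.eq_dec k (S n)) as [->|Hk''].
        { apply clause_stop; auto. intros t Ht. rewrite ezsS in Ht. rewrite ezpos, ezpS, zpB; auto. }
        exfalso. apply (not_active _ _ _ _ k SzS); [lia|exact Hact].
      * destruct k as [|[|[|k]]].
        {
          assert (Hlook : look_time adv e (negb z) 0 = t0).
          { unfold look_time. rewrite ews. fold t0. ring. }
          apply (clause_move alpha adv z om e (negb z) 0 W U 0 x0 1); auto.
          - rewrite snap_w, Hlook, ezpos, zpA. reflexivity. lra.
          - lra.
          - rewrite Hlook, ews. fold M0 vw d. replace (0 + 1 * (x0 - 0)) with x0 by ring.
            rewrite Rabs_left by lra. unfold E0. field. lra.
          - rewrite ewp. apply (f_equal (Lp W U)). ring.
          - intros t Ht. rewrite ews in Ht. rewrite Hlook in Ht. fold M0 in Ht.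
            rewrite ewpos, wpA by lra. reflexivity.
          - intros t Ht. rewrite Hlook in Ht |- *. fold M0 vw d in Ht |- *.
            replace (0 + 1 * (x0 - 0)) with x0 in Ht |- * by ring. rewrite Rabs_left in Ht by lra.
            rewrite ewpos, wpB. unfold L. rewrite Lp_move_up; auto. apply (f_equal (Lp W U)). unfold d. ring.
            unfold E0. lra. }
        {
          set (t1 := look_time adv e (negb z) 1).
          assert (Ht1 : t1 = E0 + wait adv (negb z) 1) by (unfold t1, look_time; rewrite ews; reflexivity).
          assert (HM1 : t1 + delay adv (negb z) 1 = M1) by (rewrite Ht1; reflexivity).
          apply (clause_move alpha adv z om e (negb z) 1 W U x0 p 1); auto.
          - rewrite snap_w. fold t1. rewrite ezpos, zpB. reflexivity. pose proof (Hwd (negb z) 1%nat). lra.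
          - lra.
          - fold t1. rewrite HM1, ews. fold vw d. replace (x0 + 1 * (p - x0)) with p by ring.
            rewrite Rabs_right by lra. unfold E1. reflexivity.
          - rewrite ewp. apply (f_equal (Lp W U)). ring.
          - intros t Ht. fold t1 in Ht. rewrite ews in Ht. rewrite HM1 in Ht. rewrite ewpos, wpC by lra. reflexivity.
          - intros t Ht. fold t1 in Ht |- *. rewrite HM1 in Ht |- *. fold vw d in Ht |- *.
            replace (x0 + 1 * (p - x0)) with p in Ht |- * by ring. rewrite Rabs_right in Ht by lra.
            rewrite ewpos, wpD. unfold L. rewrite Lp_move_dn; auto. lra.
            unfold E1. lra. }
        { apply clause_stop; auto. intros t Ht. rewrite ews in Ht. rewrite ewpos, ewp, wpE; auto. }
        exfalso. apply (not_active _ _ _ _ (S (S (S k))) Sw2); [lia|exact Hact].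
  - intros e He.
    assert (Hw0 : forall t, 0 <= t <= M0 -> pos e (negb z) t = L 0).
    { intros t Ht. destruct (ex_init _ _ _ _ (negb z) He) as [Hs0 Hp0].
      rewrite (ex_rest _ _ _ _ _ 0 He (active0 _ _ _)). rewrite Hp0. auto.
      unfold look_time. rewrite Hs0. fold t0. unfold M0 in Ht. lra. }
    assert (Z1 : forall k, (k <= n)%nat -> active adv e z k /\ start e z k = tau k /\
              spos e z k = L (a k) /\ (forall t, 0 <= t <= tau k -> pos e z t = L (1 - vz * t / d))).
    { induction k as [|k IH]; intros Hk.
      - destruct (ex_init _ _ _ _ z He) as [Hs0 Hp0].
        assert (Ht0' : tau 0%nat = 0) by (unfold tau; rewrite Ha0; field; lra).
        split; [apply active0|]. split; [rewrite Hs0; auto|]. split; [rewrite Hp0, Ha0; auto|].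
        intros t Ht. rewrite Ht0' in Ht. assert (t = 0) by lra. subst t.
        rewrite (ex_rest _ _ _ _ _ 0 He (active0 _ _ _)). rewrite Hp0, <- HL1. apply (f_equal (Lp W U)). field. lra.
        unfold look_time. rewrite Hs0, (proj1 (Hz 0%nat)), (proj2 (Hz 0%nat)). lra.
      - destruct (IH ltac:(lia)) as (Ha' & Hs & Hp & Hpos).
        assert (Htk : tau k < M0) by (apply Hlt'; lia).
        assert (Hlook : look_time adv e z k = tau k).
        { unfold look_time. rewrite Hs, (proj1 (Hz k)). ring. }
        assert (Hsn : snapshot adv e z k = L 0).
        { unfold snapshot. rewrite Hlook. apply Hw0. split; auto. lra. }
        pose proof (Hapos k) as Hak.
        assert (NS : ~ stops_at adv e z k).
        { unfold stops_at. rewrite Hsn, Hp. apply Lp_neq; auto. lra. }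
        pose proof (ex_move_L alpha adv z om e z k W U (a k) 0 He Had Ha' Hd Hp Hsn ltac:(lra)) as HH.
        cbv zeta in HH. rewrite (Hlz k) in HH by lia. rewrite Hlook, (proj2 (Hz k)) in HH.
        fold vz d L in HH.
        replace (a k + b * (0 - a k)) with (a (S k)) in HH by (rewrite HaS; ring).
        replace (Rabs (a k - a (S k))) with (b * a k) in HH by (rewrite HaS, Rabs_right; nra).
        destruct HH as (H1 & H2 & H3).
        split; [apply activeS; auto|]. split; [rewrite H1, HtauS; field; lra|]. split; auto.
        intros t Ht. destruct (Rle_dec t (tau k)) as [Htk'|Htk']; [apply Hpos; lra|].
        rewrite H3. unfold L. rewrite Lp_move_dn; auto. apply (f_equal (Lp W U)). fold d. unfold tau. field. lra.
        rewrite HaS; nra. rewrite HtauS in Ht. lra. }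
    destruct (Z1 n (le_n _)) as (Hazn & Hszn & Hpzn & Hposz).
    destruct (ex_init _ _ _ _ (negb z) He) as [Hsw0 Hpw0].
    assert (Hlw0 : look_time adv e (negb z) 0 = t0) by (unfold look_time; rewrite Hsw0; fold t0; ring).
    assert (Hsnw0 : snapshot adv e (negb z) 0 = L x0).
    { rewrite snap_w, Hlw0. rewrite Hposz. reflexivity. lra. }
    assert (Hpw0' : spos e (negb z) 0 = L 0) by (rewrite Hpw0; auto).
    pose proof (ex_move_L alpha adv z om e (negb z) 0 W U 0 x0 He Had (active0 _ _ _) Hd Hpw0' Hsnw0 ltac:(lra)) as HH.
    cbv zeta in HH. rewrite (Hlw 0%nat) in HH by lia. rewrite Hlw0 in HH. fold M0 vw d L in HH.
    replace (0 + 1 * (x0 - 0)) with x0 in HH by ring.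
    replace (Rabs (0 - x0)) with x0 in HH by (rewrite Rabs_left; lra).
    destruct HH as (Hw1s & Hw1p & Hw0m).
    assert (NSw0 : ~ stops_at adv e (negb z) 0).
    { unfold stops_at. rewrite Hsnw0, Hpw0'. apply Lp_neq; auto. lra. }
    assert (Hwmove : forall t, M0 <= t <= E0 -> pos e (negb z) t = L ((t - M0) * vw / d)).
    { intros t Ht. rewrite Hw0m by (unfold E0 in Ht; lra). unfold L. rewrite Lp_move_up; auto.
      apply (f_equal (Lp W U)). unfold d. ring. }
    assert (Hlzn' : look_time adv e z n = tau n) by (unfold look_time; rewrite Hszn, (proj1 (Hz n)); ring).
    assert (Hsnzn : snapshot adv e z n = L y).
    { unfold snapshot. rewrite Hlzn', Hwmove. reflexivity. split; auto.
      unfold E0. apply Rmult_le_reg_r with (vw / d). apply Rdiv_lt_0_compat; auto.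
      replace ((M0 + x0 * d / vw) * (vw / d)) with (M0 * vw / d + x0) by (field; lra).
      replace (tau n * (vw / d)) with (y + M0 * vw / d) by (unfold y; field; lra). lra. }
    assert (NSzn : ~ stops_at adv e z n).
    { unfold stops_at. rewrite Hsnzn, Hpzn. apply Lp_neq; auto. lra. }
    pose proof (ex_move_L alpha adv z om e z n W U (a n) y He Had Hazn Hd Hpzn Hsnzn ltac:(lra)) as HH.
    cbv zeta in HH. rewrite Hlzn in HH. rewrite Hlzn', (proj2 (Hz n)) in HH. fold vz d L in HH.
    fold p in HH.
    replace (Rabs (a n - p)) with (c * (a n - y)) in HH by (rewrite Rabs_right; unfold p; nra).
    destruct HH as (Hzs1 & Hzp1 & _).
    assert (Hzs1' : start e z (S n) = taum) by (rewrite Hzs1; unfold taum; field; lra).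
    assert (HazS : active adv e z (S n)) by (apply activeS; auto).
    assert (SzS : stops_at adv e z (S n)).
    { unfold stops_at, snapshot, look_time. rewrite Hzs1', (proj1 (Hz (S n))), Rplus_0_r.
      rewrite Hwmove, Htaum; auto. lra. }
    assert (HzF : forall t, taum <= t -> pos e z t = L p).
    { intros t Ht. rewrite (ex_stop _ _ _ _ _ _ He HazS SzS); auto. rewrite Hzs1'; auto. }
    assert (Haw1 : active adv e (negb z) 1) by (apply activeS; auto; apply active0).
    assert (Hlw1 : E0 <= look_time adv e (negb z) 1).
    { unfold look_time. rewrite Hw1s. pose proof (proj1 (Hwd (negb z) 1%nat)). unfold E0. lra. }
    assert (Hsnw1 : snapshot adv e (negb z) 1 = L p).
    { rewrite snap_w. apply HzF. lra. }
    pose proof (ex_move_L alpha adv z om e (negb z) 1 W U x0 p He Had Haw1 Hd Hw1p Hsnw1 ltac:(lra)) as HH.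
    cbv zeta in HH. rewrite (Hlw 1%nat) in HH by lia.
    replace (x0 + 1 * (p - x0)) with p in HH by ring. fold d vw in HH.
    destruct HH as (Hw2s & Hw2p & _).
    assert (NSw1 : ~ stops_at adv e (negb z) 1).
    { unfold stops_at. rewrite Hsnw1, Hw1p. apply Lp_neq; auto. lra. }
    assert (Haw2 : active adv e (negb z) 2) by (apply activeS; auto).
    assert (Sw2 : stops_at adv e (negb z) 2).
    { unfold stops_at. rewrite snap_w, Hw2p. apply HzF.
      unfold look_time. rewrite Hw2s. pose proof (Hwd (negb z) 1%nat). pose proof (Hwd (negb z) 2%nat).
      assert (0 <= Rabs (x0 - p) * d / vw).
      { apply Rmult_le_pos; [apply Rmult_le_pos; [apply Rabs_pos| lra]| left; apply Rinv_0_lt_compat; auto]. }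
      lra. }
    apply (gathered_of adv e z (S n) 2); auto. rewrite Hzp1, Hw2p. reflexivity.

Qed.

Lemma scenAB alpha adv z :
  0 < alpha -> admissible alpha adv z ->
  0 < nrm (psub (init adv z) (init adv (negb z))) ->
  nrm (psub (init adv z) (init adv (negb z))) / speed adv z <= wait adv (negb z) 0 + delay adv (negb z) 0 ->
  exists (N : nat) (rho : randomness),
  forall om : randomness,
    (forall i k j, (k < N)%nat -> (j < N)%nat -> om i k j = rho i k j) ->
    (exists e, is_execution (Aalg alpha) adv om e) /\
    (forall e, is_execution (Aalg alpha) adv om e -> gathered adv e).
Proof.
  intros Hal Had Hd HM.
  pose proof Had as (_ & _ & _ & Hwd & Hz & _).
  set (W := init adv (negb z)) in *.
  set (U := psub (init adv z) W) in *.
  set (d := nrm U) in *.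
  set (L := Lp W U).
  assert (HL1 : L 1 = init adv z) by apply Lp_1.
  assert (HL0 : L 0 = W) by apply Lp_0.
  set (vz := speed adv z) in *. set (vw := speed adv (negb z)) in *.
  assert (Hvz : 0 < vz) by (eapply speed_pos; eauto).
  assert (Hvw : 0 < vw) by (eapply speed_pos; eauto).
  set (t0 := wait adv (negb z) 0) in *.
  set (M0 := t0 + delay adv (negb z) 0) in *.
  assert (Ht0 : 0 <= t0) by apply Hwd.
  assert (HM0 : t0 <= M0) by (pose proof (proj2 (Hwd (negb z) 0%nat)); unfold M0; lra).
  set (T := d / vz) in *.
  assert (HT : 0 < T) by (apply Rdiv_lt_0_compat; auto).
  set (rho := fun (i : bool) (k j : nat) =>
     if Bool.eqb i z then code true true false j else code true false false j).
  exists 3%nat, rho. intros om Hom.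
  assert (Hlz : forall k, (k < 3)%nat -> lam alpha (om z k) = 1).
  { intros k Hk. rewrite (lam_ext alpha (om z k) (rho z k)) by (intros; apply Hom; lia).
    unfold rho. rewrite eqb_reflx. reflexivity. }
  assert (Hlw : forall k, (k < 3)%nat -> lam alpha (om (negb z) k) = 0).
  { intros k Hk. rewrite (lam_ext alpha (om (negb z) k) (rho (negb z) k)) by (intros; apply Hom; lia).
    unfold rho. rewrite eqb_nz. reflexivity. }
  split.
  - set (zp := fun t => if Rle_dec t T then 1 - vz * t / d else 0).
    assert (zpA : forall t, t <= T -> zp t = 1 - vz * t / d).
    { intros t Ht. unfold zp. destruct (Rle_dec t T); [reflexivity|lra]. }
    assert (zpB : forall t, T <= t -> zp t = 0).
    { intros t Ht. unfold zp. destruct (Rle_dec t T); [|reflexivity].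
      assert (t = T) by lra. subst t. unfold T. field. lra. }
    set (e := mkex z (fun k => match k with 0%nat => 0 | _ => T end)
                     (fun k => match k with 0%nat => L 1 | _ => L 0 end)
                     (fun t => L (zp t))
                     (fun k => match k with 0%nat => 0 | _ => M0 end)
                     (fun k => L 0)
                     (fun t => L 0)).
    assert (ezpos : forall t, pos e z t = L (zp t)) by (intros; unfold e; rewrite mk_pos_z; reflexivity).
    assert (ewpos : forall t, pos e (negb z) t = L 0) by (intros; unfold e; rewrite mk_pos_w; reflexivity).
    assert (ezs : forall k, start e z k = match k with 0%nat => 0 | _ => T end)
      by (intros; unfold e; rewrite mk_start_z; reflexivity).
    assert (ezp : forall k, spos e z k = match k with 0%nat => L 1 | _ => L 0 end)
      by (intros; unfold e; rewrite mk_spos_z; reflexivity).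
    assert (ews : forall k, start e (negb z) k = match k with 0%nat => 0 | _ => M0 end)
      by (intros; unfold e; rewrite mk_start_w; reflexivity).
    assert (ewp : forall k, spos e (negb z) k = L 0)
      by (intros; unfold e; rewrite mk_spos_w; reflexivity).
    assert (Sz1 : stops_at adv e z 1).
    { unfold stops_at, snapshot. rewrite ewpos, ezp. reflexivity. }
    exists e. apply is_exec_of.
    + intros i. destruct (bool_cases i z) as [->| ->].
      * rewrite ezs, ezp. auto.
      * rewrite ews, ewp. auto.
    + intros i k Hact. destruct (bool_cases i z) as [->| ->].
      * destruct k as [|[|k]].
        { assert (Hlook : look_time adv e z 0 = 0).
          { unfold look_time. rewrite ezs, (proj1 (Hz 0%nat)). ring. }
          apply (clause_move alpha adv z om e z 0 W U 1 0 1); auto.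
          - unfold snapshot. rewrite ewpos. reflexivity.
          - rewrite ezs, Hlook, (proj2 (Hz 0%nat)). replace (1 - (1 + 1 * (0 - 1))) with 1 by ring. fold vz d. rewrite Rabs_right by lra.
            unfold T. field. lra.
          - rewrite ezp. apply (f_equal (Lp W U)). ring.
          - intros t Ht. rewrite ezs, Hlook, (proj2 (Hz 0%nat)) in Ht.
            assert (t = 0) by lra. subst t. rewrite ezpos, zpA by lra. apply (f_equal (Lp W U)).
            field. lra.
          - intros t Ht. rewrite Hlook, (proj2 (Hz 0%nat)) in Ht |- *. fold vz d in Ht.
            rewrite Rabs_right in Ht by lra.
            rewrite ezpos, zpA. unfold L. rewrite Lp_move_dn; auto.
            apply (f_equal (Lp W U)). change (speed adv z) with vz; change (nrm U) with d. field. lra.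
            lra. unfold T. lra. }
        { apply clause_stop; auto. intros t Ht. rewrite ezs in Ht. rewrite ezpos, ezp, zpB; auto. }
        exfalso. apply (not_active _ _ _ _ (S (S k)) Sz1); [lia|exact Hact].
      * assert (Hlook : look_time adv e (negb z) 0 = t0).
        { unfold look_time. rewrite ews. fold t0. ring. }
        destruct (Rle_dec T t0) as [HA|HB].
        { assert (Sw0 : stops_at adv e (negb z) 0).
          { unfold stops_at. rewrite snap_w, Hlook, ezpos, ewp, zpB; auto. }
          destruct k as [|k].
          - apply clause_stop; auto. intros t Ht. rewrite ewpos, ewp. reflexivity.
          - exfalso. apply (not_active _ _ _ _ (S k) Sw0); [lia|exact Hact]. }
        assert (Sw1 : stops_at adv e (negb z) 1).
        { unfold stops_at. rewrite snap_w, ezpos, ewp. unfold look_time. rewrite ews, zpB. reflexivity.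
          pose proof (Hwd (negb z) 1%nat). lra. }
        destruct k as [|[|k]].
        { apply (clause_move alpha adv z om e (negb z) 0 W U 0 (1 - vz * t0 / d) 0); auto.
          - rewrite snap_w, Hlook, ezpos, zpA. reflexivity. lra.
          - assert (vz * t0 / d < 1).
            { apply Rmult_lt_reg_r with (d / vz). apply Rdiv_lt_0_compat; auto.
              replace (vz * t0 / d * (d / vz)) with t0 by (field; lra). unfold T in HB. lra. }
            lra.
          - rewrite ews, Hlook. fold M0. replace (0 - (0 + 0 * (1 - vz * t0 / d - 0))) with 0 by ring.
            rewrite Rabs_R0. unfold Rdiv. ring.
          - rewrite ewp. apply (f_equal (Lp W U)). ring.
          - intros t Ht. rewrite ewpos. unfold L. rewrite Lp_aff. apply (f_equal (Lp W U)). ring. }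
        { apply clause_stop; auto. intros t Ht. rewrite ewpos, ewp. reflexivity. }
        exfalso. apply (not_active _ _ _ _ (S (S k)) Sw1); [lia|exact Hact].
  - intros e He.
    assert (Hw0 : forall t, 0 <= t <= M0 -> pos e (negb z) t = L 0).
    { intros t Ht. destruct (ex_init _ _ _ _ (negb z) He) as [Hs0 Hp0].
      rewrite (ex_rest _ _ _ _ _ 0 He (active0 _ _ _)). rewrite Hp0. auto.
      unfold look_time. rewrite Hs0. fold t0. unfold M0 in Ht. lra. }
    destruct (ex_init _ _ _ _ z He) as [Hs0 Hp0].
    assert (Hlook : look_time adv e z 0 = 0).
    { unfold look_time. rewrite Hs0, (proj1 (Hz 0%nat)). ring. }
    assert (Hsn : snapshot adv e z 0 = L 0).
    { unfold snapshot. rewrite Hlook. apply Hw0. lra. }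
    assert (Hp0' : spos e z 0 = L 1) by (rewrite Hp0; auto).
    assert (NS0 : ~ stops_at adv e z 0).
    { unfold stops_at. rewrite Hsn, Hp0'. apply Lp_neq; auto. }
    pose proof (ex_move_L alpha adv z om e z 0 W U 1 0 He Had (active0 _ _ _) Hd Hp0' Hsn ltac:(lra)) as HH.
    cbv zeta in HH. rewrite (Hlz 0%nat) in HH by lia. rewrite Hlook, (proj2 (Hz 0%nat)) in HH.
    fold vz d L in HH. replace (1 + 1 * (0 - 1)) with 0 in HH by ring.
    rewrite Rabs_right in HH by lra.
    destruct HH as (H1 & H2 & H3).
    assert (Hs1 : start e z 1 = T) by (rewrite H1; unfold T; field; lra).
    assert (Ha1 : active adv e z 1) by (apply activeS; auto; apply active0).
    assert (S1 : stops_at adv e z 1).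
    { unfold stops_at, snapshot, look_time. rewrite Hs1, (proj1 (Hz 1%nat)), Rplus_0_r, H2.
      apply Hw0. lra. }
    assert (HzF : forall t, T <= t -> pos e z t = L 0).
    { intros t Ht. rewrite (ex_stop _ _ _ _ _ _ He Ha1 S1), H2; auto. rewrite Hs1; auto. }
    destruct (ex_init _ _ _ _ (negb z) He) as [Hsw0 Hpw0].
    assert (Hpw0' : spos e (negb z) 0 = L 0) by (rewrite Hpw0; auto).
    assert (Hlw0 : look_time adv e (negb z) 0 = t0) by (unfold look_time; rewrite Hsw0; fold t0; ring).
    destruct (Rle_dec T t0) as [HA|HB].
    + assert (Sw0 : stops_at adv e (negb z) 0).
      { unfold stops_at. rewrite snap_w, Hlw0, HzF, Hpw0'; auto. }
      apply (gathered_of adv e z 1 0); auto. apply active0. rewrite H2, Hpw0'. reflexivity.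
    + assert (Hx : 0 < 1 - vz * t0 / d).
      { assert (vz * t0 / d < 1).
        { apply Rmult_lt_reg_r with (d / vz). apply Rdiv_lt_0_compat; auto.
          replace (vz * t0 / d * (d / vz)) with t0 by (field; lra). unfold T in HB. lra. }
        lra. }
      assert (Hsnw : snapshot adv e (negb z) 0 = L (1 - vz * t0 / d)).
      { rewrite snap_w, Hlw0, H3. unfold L. rewrite Lp_move_dn; auto. apply (f_equal (Lp W U)).
        change (speed adv z) with vz; change (nrm U) with d. unfold Rdiv. ring. lra.
        split; [lra|]. unfold T in HB. lra. }
      assert (NSw : ~ stops_at adv e (negb z) 0).
      { unfold stops_at. rewrite Hsnw, Hpw0'. apply Lp_neq; auto. lra. }
      pose proof (ex_move_L alpha adv z om e (negb z) 0 W U 0 (1 - vz * t0 / d) He Had (active0 _ _ _) Hd Hpw0' Hsnw ltac:(lra)) as HH.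
      cbv zeta in HH. rewrite (Hlw 0%nat) in HH by lia. rewrite Hlw0 in HH. fold M0 vw d L in HH.
      replace (0 + 0 * (1 - vz * t0 / d - 0)) with 0 in HH by ring.
      replace (0 - 0) with 0 in HH by ring. rewrite Rabs_R0 in HH.
      destruct HH as (Hw1 & Hw1p & _).
      assert (Haw1 : active adv e (negb z) 1) by (apply activeS; auto; apply active0).
      assert (Sw1 : stops_at adv e (negb z) 1).
      { unfold stops_at. rewrite snap_w, Hw1p. apply HzF. unfold look_time. rewrite Hw1.
        pose proof (Hwd (negb z) 1%nat). unfold Rdiv. lra. }
      apply (gathered_of adv e z 1 1); auto. rewrite H2, Hw1p. reflexivity.
Qed.

Lemma scenD alpha adv z :
  admissible alpha adv z -> init adv z = init adv (negb z) ->
  exists (N : nat) (rho : randomness),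
  forall om : randomness,
    (forall i k j, (k < N)%nat -> (j < N)%nat -> om i k j = rho i k j) ->
    (exists e, is_execution (Aalg alpha) adv om e) /\
    (forall e, is_execution (Aalg alpha) adv om e -> gathered adv e).
Proof.
  intros Had HI. pose proof Had as (_ & _ & _ & Hwd & Hz & _).
  exists 0%nat, (fun _ _ _ => false). intros om _. split.
  - set (P := init adv z).
    set (e := mkex z (fun _ => 0) (fun _ => P) (fun _ => P) (fun _ => 0) (fun _ => P) (fun _ => P)).
    assert (Sz : stops_at adv e z 0).
    { unfold stops_at, snapshot, e. rewrite mk_pos_w, mk_spos_z. reflexivity. }
    assert (Sw : stops_at adv e (negb z) 0).
    { unfold stops_at. rewrite snap_w. unfold e. rewrite mk_pos_z, mk_spos_w. reflexivity. }
    exists e. apply is_exec_of.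
    + intros i. destruct (bool_cases i z) as [->| ->]; unfold e.
      * rewrite mk_start_z, mk_spos_z; auto.
      * rewrite mk_start_w, mk_spos_w; split; auto.
    + intros i k Hact. destruct (bool_cases i z) as [->| ->]; destruct k as [|k].
      * apply clause_stop; auto.
      * exfalso. apply (not_active _ _ _ _ (S k) Sz); [lia|exact Hact].
      * apply clause_stop; auto.
      * exfalso. apply (not_active _ _ _ _ (S k) Sw); [lia|exact Hact].
  - intros e He.
    destruct (ex_init _ _ _ _ z He) as [Hs0 Hp0].
    destruct (ex_init _ _ _ _ (negb z) He) as [Hsw0 Hpw0].
    assert (Sz : stops_at adv e z 0).
    { unfold stops_at, snapshot. rewrite (ex_rest _ _ _ _ _ 0 He (active0 _ _ _)).
      rewrite Hp0, Hpw0; auto. unfold look_time. rewrite Hs0, Hsw0, (proj1 (Hz 0%nat)).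
      pose proof (Hwd (negb z) 0%nat). lra. }
    assert (Sw : stops_at adv e (negb z) 0).
    { unfold stops_at. rewrite snap_w. rewrite (ex_stop _ _ _ _ _ _ He (active0 _ _ _) Sz).
      rewrite Hp0, Hpw0; auto. unfold look_time. rewrite Hs0, Hsw0.
      pose proof (Hwd (negb z) 0%nat). lra. }
    apply (gathered_of adv e z 0 0); auto using active0. rewrite Hp0, Hpw0; auto.
Qed.

Lemma nrm_zero (Z W : point) : nrm (psub Z W) = 0 -> Z = W.
Proof.
  destruct Z as [z1 z2], W as [w1 w2]. unfold nrm, psub; cbn [fst snd]. intros H.
  assert (Hn : 0 <= (z1 - w1) ^ 2 + (z2 - w2) ^ 2) by (apply Rplus_le_le_0_compat; apply pow2_ge_0).
  apply (sqrt_eq_0 _ Hn) in H.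
  assert ((z1 - w1) ^ 2 = 0) by (pose proof (pow2_ge_0 (z1 - w1)); pose proof (pow2_ge_0 (z2 - w2)); lra).
  assert ((z2 - w2) ^ 2 = 0) by (pose proof (pow2_ge_0 (z1 - w1)); pose proof (pow2_ge_0 (z2 - w2)); lra).
  assert (z1 - w1 = 0) by nra. assert (z2 - w2 = 0) by nra.
  f_equal; lra.
Qed.

Theorem theorem4 :
  forall alpha : R, 0 < alpha ->
  exists A : algorithm,
  forall (adv : adversary) (z : bool), admissible alpha adv z ->
  exists (N : nat) (rho : randomness),
  forall om : randomness,
    (forall i k j, (k < N)%nat -> (j < N)%nat -> om i k j = rho i k j) ->
    (exists e, is_execution A adv om e) /\
    (forall e, is_execution A adv om e -> gathered adv e).
Proof.
  intros alpha Hal. exists (Aalg alpha). intros adv z Had.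
  destruct (Req_dec (nrm (psub (init adv z) (init adv (negb z)))) 0) as [H0|H0].
  - apply (scenD alpha adv z); auto. apply nrm_zero; auto.
  - assert (Hd : 0 < nrm (psub (init adv z) (init adv (negb z)))).
    { pose proof (sqrt_pos (fst (psub (init adv z) (init adv (negb z))) ^ 2 + snd (psub (init adv z) (init adv (negb z))) ^ 2)).
      unfold nrm in *. lra. }
    destruct (Rlt_le_dec (wait adv (negb z) 0 + delay adv (negb z) 0)
               (nrm (psub (init adv z) (init adv (negb z))) / speed adv z)).
    + apply (scenC alpha adv z); auto.
    + apply (scenAB alpha adv z); auto.
Qed.
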